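(* Let $\iota:R\to S$ be a ring morphism such that $S$ is locally projective as a left $R$-module, and let $\mathcal C=S\otimes_RS$ be the Sweedler $S$-coring, with $\Delta(s\otimes_R s')=(s\otimes_R1)\otimes_S(1\otimes_Rs')$ and $\varepsilon(s\otimes_Rs')=ss'$. Then $\mathrm{Rat}^{\mathcal C}({}^*\mathcal C)$ is dense in ${}^*\mathcal C$ in the finite topology, and hence the functor $\mathrm{Rat}^{\mathcal C}$ from right ${}^*\mathcal C$-modules to right $\mathcal C$-comodules is exact.
   Context: For a ring $A$ and an $A$-coring $\mathcal C$ (an $A$-bimodule with coassociative counital bimodule maps $\Delta:\mathcal C\to\mathcal C\otimes_A\mathcal C$, $\varepsilon:\mathcal C\to A$, $\Delta(c)=c_{(1)}\otimes c_{(2)}$), ${}^*\mathcal C={}_A\mathrm{Hom}(\mathcal C,A)$ is a ring with product $(f\#g)(c)=g(c_{(1)}f(c_{(2)}))$. Here $A=S$, and ${}^*\mathcal C\cong{}_R\mathrm{End}(S)$ with multiplication the opposite composition (via $\varphi\mapsto(s\mapsto\varphi(1\otimes_Rs))$). Right $\mathcal C$-comodules (coactions $n\mapsto n_{[0]}\otimes n_{[1]}\in N\otimes_S\mathcal C$) are right ${}^*\mathcal C$-modules via $n\cdot f=n_{[0]}f(n_{[1]})$. For a right ${}^*\mathcal C$-module $M$, $\mathrm{Rat}^{\mathcal C}(M)$ is the set of $m\in M$ for which there is $\sum_i m_i\otimes c_i\in M\otimes_S\mathcal C$ with $m\cdot f=\sum_i m_if(c_i)$ for all $f\in{}^*\mathcal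 C$. The finite topology on ${}^*\mathcal C={}_S\mathrm{Hom}(\mathcal C,S)$ has basic open sets $\{g\mid g(c)=f(c)\ \forall c\in F\}$, $F\subseteq\mathcal C$ finite. *)

(* Defs.v *)
From HB Require Import structures.
From mathcomp Require Import all_boot all_order all_algebra.
Set Implicit Arguments. Unset Strict Implicit. Unset Printing Implicit Defensive.
Import GRing.Theory.
Local Open Scope ring_scope.

(* Setting: a ring morphism i : R -> S; S is a left R-module via r . s = i r * s.
   The Sweedler coring C = S (x)_R S has dual ring *C ~= _R End(S), with
   product the OPPOSITE composition (f # g corresponds to g \o f), via
   f |-> (s |-> f (1 (x) s)).  We work with *C through this identification. *)

Section Defs.
Variables (R S : nzRingType) (i : {rmorphism R -> S}).

Definition RdualS (f : S -> R) : Prop :=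
  (forall x y, f (x + y) = f x + f y) /\ (forall r x, f (i r * x) = r * f x).

Definition locally_projective_left : Prop :=
  forall F : seq S, exists n (fs : 'I_n -> S -> R) (ss : 'I_n -> S),
    (forall k, RdualS (fs k)) /\
    (forall x, x \in F -> x = \sum_(k < n) i (fs k x) * ss k).

(* elements of *C = _R End(S) *)
Definition Rlin (phi : S -> S) : Prop :=
  (forall x y, phi (x + y) = phi x + phi y) /\
  (forall r x, phi (i r * x) = i r * phi x).

(* the image of s in *C under S -> *C, s |-> eps(-) s; as an endomorphism
   it is right multiplication by s *)
Definition rmul (s : S) : S -> S := fun t => t * s.

(* Rat^C( *C ): phi is rational iff there are psi_k in *C and
   c_k = 1 (x) t_k in C with  phi # chi = sum_k psi_k chi(c_k)  for all chi,
   i.e. chi \o phi = sum_k (x |-> psi_k x * chi t_k). *)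
Definition rat_dual (phi : S -> S) : Prop :=
  exists n (psis : 'I_n -> S -> S) (ts : 'I_n -> S),
    (forall k, Rlin (psis k)) /\
    (forall chi, Rlin chi -> forall x,
        chi (phi x) = \sum_(k < n) psis k x * chi (ts k)).

Definition rat_dense : Prop :=
  forall (phi : S -> S), Rlin phi -> forall F : seq S,
    exists psi, Rlin psi /\ rat_dual psi /\ forall t, t \in F -> psi t = phi t.

(* right *C-modules: an additive group M with action m . f, written
   act phi m for phi the endomorphism corresponding to f;
   m . (f # g) = (m . f) . g  becomes  act (g \o f) m = act g (act f m). *)
Definition is_dual_module (M : zmodType) (act : (S -> S) -> M -> M) : Prop :=
  [/\ forall phi, Rlin phi -> forall m m', act phi (m + m') = act phi m + act phi m',
      forall phi psi, Rlin phi -> Rlin psi -> forall m,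
        act (fun t => phi t + psi t) m = act phi m + act psi m,
      forall m, act id m = m &
      forall phi psi, Rlin phi -> Rlin psi -> forall m,
        act (phi \o psi) m = act phi (act psi m)].

Definition is_dual_hom (M N : zmodType) (actM : (S -> S) -> M -> M)
  (actN : (S -> S) -> N -> N) (h : M -> N) : Prop :=
  (forall m m', h (m + m') = h m + h m') /\
  (forall phi, Rlin phi -> forall m, h (actM phi m) = actN phi (h m)).

(* Rat^C(M): m is rational iff there is sum_k m_k (x)_S c_k in M (x)_S C with
   m . f = sum_k m_k f(c_k) for all f.  Writing c_k = sum s (x) t and using
   m (x)_S (s (x) t) = m.s (x)_S (1 (x) t), elements of M (x)_S C are sums
   sum_k m_k (x)_S (1 (x) t_k), and m_k f(1 (x) t_k) = m_k . (chi t_k),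
   the right S-action on M being through s |-> eps(-)s, i.e. act (rmul s). *)
Definition rat_elem (M : zmodType) (act : (S -> S) -> M -> M) (m : M) : Prop :=
  exists n (ms : 'I_n -> M) (ts : 'I_n -> S),
    forall chi, Rlin chi ->
      act chi m = \sum_(k < n) act (rmul (chi (ts k))) (ms k).

Definition rat_exact : Prop :=
  forall (K M N : zmodType) (actK : (S -> S) -> K -> K)
         (actM : (S -> S) -> M -> M) (actN : (S -> S) -> N -> N)
         (f : K -> M) (g : M -> N),
    is_dual_module actK -> is_dual_module actM -> is_dual_module actN ->
    is_dual_hom actK actM f -> is_dual_hom actM actN g ->
    injective f -> (forall m, g m = 0 <-> exists k, m = f k) ->
    (forall n, exists m, g m = n) ->
    [/\ (forall k, rat_elem actK k -> rat_elem actM (f k)),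
        (forall m, rat_elem actM m -> rat_elem actN (g m)),
        (forall m, rat_elem actM m -> g m = 0 ->
            exists k, rat_elem actK k /\ f k = m) &
        (forall n, rat_elem actN n -> exists m, rat_elem actM m /\ g m = n)].

End Defs.

(* Main.v *)
Require Import Defs.
From mathcomp Require Import all_boot all_order all_algebra.
From Stdlib Require Import FunctionalExtensionality.
Set Implicit Arguments. Unset Strict Implicit. Unset Printing Implicit Defensive.
Import GRing.Theory.
Local Open Scope ring_scope.

Lemma idem0 (V : zmodType) (a : V) : a = a + a -> a = 0.
Proof. move=> H; apply: (@addrI _ a); rewrite addr0; exact: esym H. Qed.

Lemma add_sum (V W : zmodType) (h : V -> W) :
  (forall x y, h (x + y) = h x + h y) ->
  forall n (a : 'I_n -> V), h (\sum_(k < n) a k) = \sum_(k < n) h (a k).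
Proof.
move=> hD; have h0 : h 0 = 0 by apply: idem0; rewrite -hD addr0.
elim=> [|n IH] a; first by rewrite !big_ord0.
by rewrite !big_ord_recl hD IH.
Qed.

Section Main.
Variables (R S : nzRingType) (i : {rmorphism R -> S}).

Lemma Rlin_comp phi psi : Rlin i phi -> Rlin i psi -> Rlin i (phi \o psi).
Proof. by move=> [a1 b1] [a2 b2]; split=> *; rewrite /= ?a2 ?a1 ?b2 ?b1. Qed.

Lemma Rlin_rmul s : Rlin i (rmul s).
Proof. by split=> *; rewrite /rmul ?mulrDl ?mulrA. Qed.

Lemma Rlin_id : Rlin i id.
Proof. by []. Qed.

Lemma Rlin_theta f : RdualS i f -> Rlin i (fun x => i (f x)).
Proof. by move=> [a b]; split=> *; rewrite ?a ?b ?rmorphD ?rmorphM. Qed.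

Lemma Rlin_sum n (F : 'I_n -> S -> S) : (forall k, Rlin i (F k)) ->
  Rlin i (fun x => \sum_(k < n) F k x).
Proof.
move=> HF; split.
  by move=> x y; rewrite -big_split; apply: eq_bigr => k _; case: (HF k) => ->.
by move=> r x; rewrite mulr_sumr; apply: eq_bigr => k _; case: (HF k) => _ ->.
Qed.

Lemma Rlin_sumE phi n (a : 'I_n -> S) : Rlin i phi ->
  phi (\sum_(k < n) a k) = \sum_(k < n) phi (a k).
Proof. by case=> hD _; apply: add_sum. Qed.

Lemma dual_basis_eval (F : seq S) n (fs : 'I_n -> S -> R) (ss : 'I_n -> S) :
  (forall x, x \in F -> x = \sum_(k < n) i (fs k x) * ss k) ->
  forall chi, Rlin i chi -> forall x, x \in F ->
    chi x = \sum_(k < n) i (fs k x) * chi (ss k).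
Proof.
move=> Hb chi Hc x xF; rewrite {1}(Hb x xF) Rlin_sumE //.
by apply: eq_bigr => k _; case: Hc => _ ->.
Qed.

Lemma act_sum (M : zmodType) (act : (S -> S) -> M -> M) :
  is_dual_module i act -> forall n (F : 'I_n -> S -> S) m,
  (forall k, Rlin i (F k)) ->
  act (fun x => \sum_(k < n) F k x) m = \sum_(k < n) act (F k) m.
Proof.
case=> _ aD _ _; elim=> [|n IH] F m HF.
  rewrite big_ord0.
  have -> : (fun x : S => \sum_(k < 0) F k x) = (fun x => 0 + 0).
    by apply: functional_extensionality => x; rewrite big_ord0 addr0.
  have z : Rlin i (fun _ : S => 0 : S) by split=> *; rewrite ?addr0 ?mulr0.
  rewrite aD //; have h0 : act (fun _ : S => 0) m = 0.
    apply: idem0; rewrite -aD //; congr act.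
    by apply: functional_extensionality => x; rewrite addr0.
  by rewrite h0 addr0.
have -> : (fun x : S => \sum_(k < n.+1) F k x) =
   (fun x => F ord0 x + (fun y => \sum_(k < n) F (lift ord0 k) y) x).
  by apply: functional_extensionality => x; rewrite big_ord_recl.
rewrite aD //; last by apply: Rlin_sum.
by rewrite IH // big_ord_recl.
Qed.

Lemma act_sumr (M : zmodType) (act : (S -> S) -> M -> M) :
  is_dual_module i act -> forall phi, Rlin i phi -> forall n (a : 'I_n -> M),
  act phi (\sum_(k < n) a k) = \sum_(k < n) act phi (a k).
Proof. by case=> aD _ _ _ phi Hp; apply: add_sum; apply: aD. Qed.

Lemma key (M : zmodType) (act : (S -> S) -> M -> M) m :
  locally_projective_left i -> is_dual_module i act -> rat_elem i act m ->
  exists p (fs : 'I_p -> S -> R) (ss : 'I_p -> S),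
    (forall l, RdualS i (fs l)) /\
    forall chi, Rlin i chi ->
      act chi m = \sum_(l < p) act (rmul (chi (ss l))) (act (fun x => i (fs l x)) m).
Proof.
move=> lp HM [n [ms [ts Hr]]].
have [p [fs [ss [Hfs Hb]]]] := lp [seq ts j | j <- enum 'I_n].
exists p, fs, ss; split; first by [].
move=> chi Hc.
pose psi := fun x => \sum_(l < p) (rmul (chi (ss l)) \o (fun y => i (fs l y))) x.
have Hpsi : Rlin i psi.
  apply: (@Rlin_sum p (fun l => rmul (chi (ss l)) \o (fun y => i (fs l y)))) => l.
  apply: Rlin_comp; [exact: Rlin_rmul|exact: Rlin_theta].
have E : act chi m = act psi m.
  rewrite Hr // Hr //; apply: eq_bigr => j _.
  rewrite (dual_basis_eval Hb Hc) //.
  by apply: map_f; rewrite mem_enum.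
rewrite E /psi (@act_sum _ _ HM p (fun l => rmul (chi (ss l)) \o (fun y => i (fs l y)))); last first.
  move=> l; apply: Rlin_comp; [exact: Rlin_rmul|exact: Rlin_theta].
apply: eq_bigr => l _; case: HM => _ _ _ ->; first by [].
  exact: Rlin_rmul.
exact: Rlin_theta.
Qed.

End Main.

Theorem mainTheorem18 (R S : nzRingType) (i : {rmorphism R -> S}) :
  locally_projective_left i -> rat_dense i /\ rat_exact i.
Proof.
move=> lp; split.
  move=> phi Hphi F; have [n [fs [ss [Hfs Hb]]]] := lp F.
  pose th := fun k x => i (fs k x).
  have Hth : forall k, Rlin i (th k) by move=> k; apply: Rlin_theta.
  exists (fun x => \sum_(k < n) (rmul (phi (ss k)) \o th k) x); split.
    apply: (@Rlin_sum _ _ i n (fun k => rmul (phi (ss k)) \o th k)) => k.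
    by apply: Rlin_comp => //; apply: Rlin_rmul.
  split.
    exists n, th, (fun k => phi (ss k)); split => // chi Hc x.
    rewrite (Rlin_sumE _ Hc); apply: eq_bigr => k _; case: Hc => _ Hc.
    exact: Hc.
  by move=> t tF; rewrite (dual_basis_eval Hb Hphi tF).
move=> K M N aK aM aN f g HK HM HN [fD fA] [gD gA] finj gker gsurj.
have Rr := @Rlin_rmul _ _ i.
split.
- move=> k [n [ms [ts Hr]]]; exists n, (fun j => f (ms j)), ts => chi Hc.
  rewrite -fA // Hr // add_sum //; apply: eq_bigr => j _; exact: fA.
- move=> m [n [ms [ts Hr]]]; exists n, (fun j => g (ms j)), ts => chi Hc.
  rewrite -gA // Hr // add_sum //; apply: eq_bigr => j _; exact: gA.
- move=> m Hm /gker [k Em]; subst m.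
  have [p [fs [ss [Hfs Hk]]]] := key lp HM Hm.
  exists k; split => //.
  exists p, (fun l => aK (fun x => i (fs l x)) k), ss => chi Hc.
  apply: finj; rewrite fA // Hk // add_sum //; apply: eq_bigr => l _.
  by rewrite fA // fA //; apply: Rlin_theta.
- move=> n Hn; have [m0 Em0] := gsurj n.
  have [p [fs [ss [Hfs Hk]]]] := key lp HN Hn.
  have Ht : forall l, Rlin i (fun x => i (fs l x)) by move=> l; apply: Rlin_theta.
  case: (HM) => _ _ _ cM.
  exists (\sum_(l < p) aM (rmul (ss l)) (aM (fun x => i (fs l x)) m0)); split.
    exists p, (fun l => aM (fun x => i (fs l x)) m0), ss => chi Hc.
    rewrite (act_sumr HM Hc); apply: eq_bigr => l _.
    rewrite -cM // -cM //; last by apply: Rlin_comp.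
    rewrite -cM //; congr aM; apply: functional_extensionality => x /=.
    by rewrite /rmul; case: Hc => _ ->.
  case: (HN) => _ _ idN _.
  rewrite -[RHS]idN Hk //; idtac.
  all: try exact: Rlin_id.
  rewrite add_sum //; apply: eq_bigr => l _.
  by rewrite gA // gA // Em0.
Qed.
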